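(* Let $k$ be a positive integer. If a graph $G$ is $k$-maximal, then $G=G_1*_k G_2$ where, for each $i=1,2$, either $G_i=K_1$ or $G_i$ is $k$-maximal.
   Context: Graphs are finite, loopless, possibly with multiple edges. $\kappa'(G)$ is the edge connectivity and $\overline{\kappa'}(G)=\max\{\kappa'(H): H \text{ a subgraph of } G\}$. A graph $G$ is $k$-maximal if $\overline{\kappa'}(G)\le k$ but for any new edge $e\notin E(G)$ joining two vertices of $G$ (possibly parallel to an existing edge), $\overline{\kappa'}(G+e)\ge k+1$. For vertex-disjoint connected graphs $G_1,G_2$ and a set $K$ of $k$ edges each having one end in $V(G_1)$ and the other in $V(G_2)$, the $k$-edge-join $G_1*_k G_2$ is the graph with vertex set $V(G_1)\cup V(G_2)$ and edge set $E(G_1)\cup E(G_2)\cup K$. *)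

(* Defs.v *)
From mathcomp Require Import all_boot.
Set Implicit Arguments. Unset Strict Implicit. Unset Printing Implicit Defensive.

(* A multigraph: vertex set [vset] (a subset of the ambient finite type T)
   and edge multiplicity [mult x y] = number of edges joining x and y. *)
Record mgraph (T : finType) := MGraph { vset : {set T}; mult : T -> T -> nat }.

Section Defs.
Variable T : finType.
Implicit Types G H : mgraph T.

Definition wf_graph G :=
  [/\ (forall x y, mult G x y = mult G y x),
      (forall x, mult G x x = 0) &
      (forall x y, 0 < mult G x y -> x \in vset G /\ y \in vset G)].

Definition cut G (X : {set T}) : nat :=
  \sum_(x in X) \sum_(y in vset G :\: X) mult G x y.

(* an upper bound for every cut (twice the number of edges) *)
Definition cut_bound G : nat :=
  \sum_(x in vset G) \sum_(y in vset G) mult G x y.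

(* edge connectivity kappa'(G): minimum size of an edge cut
   [X, V(G) \ X] over nonempty proper subsets X of V(G).
   For |V(G)| <= 1 there is no such X and the value is cut_bound G = 0. *)
Definition kappa' G : nat :=
  \big[minn/cut_bound G]_(X : {set T} |
     [&& X \subset vset G, X != set0 & X != vset G]) cut G X.

Definition subgraph H G :=
  [/\ wf_graph H, vset H \subset vset G & forall x y, mult H x y <= mult G x y].

(* \overline{kappa'}(G) <= k, i.e. max over subgraphs H of kappa'(H) is <= k *)
Definition kbar_le G (k : nat) := forall H, subgraph H G -> kappa' H <= k.

Definition kbar_ge G (j : nat) := exists H, subgraph H G /\ j <= kappa' H.

Definition add_edge G (u v : T) : mgraph T :=
  MGraph (vset G) (fun x y => mult G x y +
     nat_of_bool (((x == u) && (y == v)) || ((x == v) && (y == u)))).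

Definition kmaximal (k : nat) G :=
  [/\ wf_graph G, kbar_le G k &
      forall u v, u \in vset G -> v \in vset G -> u != v ->
        kbar_ge (add_edge G u v) k.+1].

Definition connected G :=
  vset G != set0 /\
  forall X : {set T}, X \subset vset G -> X != set0 -> X != vset G -> 0 < cut G X.

Definition edge_join (G1 G2 : mgraph T) (k : nat) G :=
  [/\ [/\ wf_graph G, wf_graph G1, wf_graph G2, connected G1 & connected G2],
      [disjoint vset G1 & vset G2],
      vset G = vset G1 :|: vset G2 &
      [/\ (forall x y, x \in vset G1 -> y \in vset G1 -> mult G x y = mult G1 x y),
          (forall x y, x \in vset G2 -> y \in vset G2 -> mult G x y = mult G2 x y) &
          \sum_(x in vset G1) \sum_(y in vset G2) mult G x y = k]].

End Defs.

(* Main.v *)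
Require Import Defs.
From mathcomp Require Import all_boot zify.
Set Implicit Arguments. Unset Strict Implicit. Unset Printing Implicit Defensive.

Section Aux.
Variable T : finType.
Implicit Types G H : mgraph T.

Lemma ar1 k a b : 0 < k -> a + b = k -> k <= 0 + a -> k <= 0 + b -> False.
Proof. lia. Qed.
Lemma ar2 k a c : k < a -> c <= k -> a <= c -> False.
Proof. lia. Qed.
Lemma ar3 j k a c : j < k -> k < a -> c <= j + 1 -> a <= c -> False.
Proof. lia. Qed.

Definition cross G (A B : {set T}) := \sum_(x in A) \sum_(y in B) mult G x y.

Lemma cutE G X : cut G X = cross G X (vset G :\: X).
Proof. by []. Qed.

Lemma sumsub (A B : {set T}) (F : T -> nat) : A \subset B ->
  \sum_(i in A) F i <= \sum_(i in B) F i.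
Proof.
move=> /subsetP sAB; rewrite [X in _ <= X](bigID (mem A)) /=.
apply: leq_trans (leq_addr _ _); apply: eq_leq; apply: eq_bigl => i.
by case iA: (i \in A); rewrite ?andbF ?andbT ?sAB.
Qed.

Lemma cross_sub G G' (A A' B B' : {set T}) :
  A \subset A' -> B \subset B' -> (forall x y, mult G x y <= mult G' x y) ->
  cross G A B <= cross G' A' B'.
Proof.
move=> sA sB le; rewrite /cross.
apply: (leq_trans (sumsub (fun x => \sum_(y in B) mult G x y) sA)); apply: leq_sum => x _.
apply: (leq_trans (sumsub (fun y => mult G x y) sB)); apply: leq_sum => y _; exact: le.
Qed.

Lemma cross_sym G A B : (forall x y, mult G x y = mult G y x) ->
  cross G A B = cross G B A.
Proof.
move=> sym; rewrite /cross exchange_big; apply: eq_bigr => y _.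
by apply: eq_bigr => x _.
Qed.

Lemma cross_Ur G (A B1 B2 : {set T}) : [disjoint B1 & B2] ->
  cross G A (B1 :|: B2) = cross G A B1 + cross G A B2.
Proof.
move=> dis; rewrite /cross -big_split /=; apply: eq_bigr => x _.
rewrite -(bigU _ _ _ dis); apply: eq_bigl => y; by rewrite !inE.
Qed.

Lemma cross_Ul G (A1 A2 B : {set T}) : [disjoint A1 & A2] ->
  cross G (A1 :|: A2) B = cross G A1 B + cross G A2 B.
Proof.
move=> dis; rewrite /cross -(bigU _ _ _ dis); apply: eq_bigl => y; by rewrite !inE.
Qed.

Lemma kappa_le G (X : {set T}) : X \subset vset G -> X != set0 -> X != vset G ->
  kappa' G <= cut G X.
Proof.
move=> h1 h2 h3; rewrite /kappa'.
have : X \in index_enum {set T} by rewrite mem_index_enum.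
have hP : [&& X \subset vset G, X != set0 & X != vset G] by rewrite h1 h2 h3.
elim: (index_enum _) => // a r IH; rewrite inE big_cons.
case/orP => [/eqP <-|/IH {}IH]; first by rewrite hP geq_minl.
case: ifP => // _; exact: leq_trans (geq_minr _ _) IH.
Qed.

Lemma cut_bound_ge G (X : {set T}) : X \subset vset G -> cut G X <= cut_bound G.
Proof. move=> h; apply: cross_sub => //; exact: subsetDl. Qed.

Lemma kappa_ge G c : c <= cut_bound G ->
  (forall Y : {set T}, Y \subset vset G -> Y != set0 -> Y != vset G -> c <= cut G Y) ->
  c <= kappa' G.
Proof.
move=> hb hY; rewrite /kappa'; apply: (big_ind (fun m => c <= m)) => //.
- by move=> x y hx hy; rewrite leq_min hx hy.
- by move=> Y /and3P [a b d]; apply: hY.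
Qed.

Lemma sum_ind2 (A B : {set T}) u v : u \in A -> v \in B ->
  \sum_(x in A) \sum_(y in B) nat_of_bool ((x == u) && (y == v)) = 1.
Proof.
move=> uA vB; rewrite (bigD1 u) //= [X in _ + X]big1 ?addn0.
  rewrite (bigD1 v) //= !eqxx [X in _ + X]big1 // => y /andP [_ /negbTE ->].
  by rewrite andbF.
by move=> x /andP [_ /negbTE ->]; rewrite big1.
Qed.

Lemma subgraph_refl G : wf_graph G -> subgraph G G.
Proof. by move=> w; split. Qed.

Lemma subgraph_trans H G G' : subgraph H G -> subgraph G G' -> wf_graph H ->
  subgraph H G'.
Proof.
move=> [_ s1 m1] [_ s2 m2] w; split => //; first exact: subset_trans s2.
by move=> x y; exact: leq_trans (m1 x y) (m2 x y).
Qed.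

Lemma uses_edge G H k u v : kbar_le G k -> subgraph H (add_edge G u v) ->
  k < kappa' H -> u \in vset H /\ v \in vset H.
Proof.
move=> kb [wH sH mH] lt.
have [hall|] := boolP [forall x, forall y, mult H x y <= mult G x y].
  have : subgraph H G.
    split => //; move=> x y; exact: (forallP (forallP hall x) y).
  by move=> /kb; rewrite leqNgt lt.
rewrite negb_forall => /existsP [x]; rewrite negb_forall => /existsP [y].
rewrite -ltnNge => gt.
have := mH x y; rewrite /= => le2.
have hxy : 0 < mult H x y by apply: leq_ltn_trans gt.
case: wH => _ _ /(_ x y hxy) [xH yH].
move: le2; case: (boolP ((x == u) && (y == v) || (x == v) && (y == u))).
  by case/orP => /andP [/eqP <- /eqP <-].
by move=> _; rewrite addn0 leqNgt gt.
Qed.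


Lemma disjP (A B : {set T}) : (forall z, z \in A -> z \in B -> False) ->
  [disjoint A & B].
Proof.
move=> h; rewrite disjoint_subset; apply/subsetP => z zA; rewrite inE.
by apply/negP => zB; exact: h z zA zB.
Qed.

Definition induced G (S : {set T}) : mgraph T :=
  MGraph S (fun x y => if (x \in S) && (y \in S) then mult G x y else 0).

Lemma wf_induced G (S : {set T}) : wf_graph G -> wf_graph (induced G S).
Proof.
case=> sym loop _; split => /=.
- by move=> x y; rewrite andbC sym.
- by move=> x; rewrite loop; case: ifP.
- by move=> x y; case: ifP => [/andP [] //|]; rewrite ltnn.
Qed.

Lemma induced_le G (S : {set T}) x y : mult (induced G S) x y <= mult G x y.
Proof. by rewrite /=; case: ifP. Qed.

Lemma induced_sub G (S : {set T}) : wf_graph G -> S \subset vset G -> subgraph (induced G S) G.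
Proof. move=> w sS; split => //; [exact: wf_induced | exact: induced_le]. Qed.

Lemma cut_add G u v (X : {set T}) : cut (add_edge G u v) X = cut G X +
  \sum_(x in X) \sum_(y in vset G :\: X)
     nat_of_bool (((x == u) && (y == v)) || ((x == v) && (y == u))).
Proof.
rewrite /cut /= -big_split /=; apply: eq_bigr => x _; by rewrite -big_split.
Qed.

Lemma side_ok G k (S : {set T}) : 0 < k -> kmaximal k G -> S \subset vset G -> S != set0 ->
  S != vset G -> cut G S = k ->
  (forall Y : {set T}, Y \subset vset G -> Y != set0 -> Y != vset G -> k <= cut G Y) ->
  [/\ wf_graph (induced G S), connected (induced G S) & kmaximal k (induced G S)].
Proof.
move=> k0 [wG kb km] sSV S0 SV cS kmin.
have wI := wf_induced S wG.
split => //.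
  split => // A /= sAS A0 AS; rewrite lt0n; apply/negP => /eqP h0.
  set B := S :\: A.
  have sA := subsetP sAS; have sS := subsetP sSV.
  have hcA : cut (induced G S) A = cross G A B.
    rewrite /cut /cross /=; apply: eq_bigr => x xA; apply: eq_bigr => y.
    by rewrite !inE => /andP [_ yS]; rewrite (sA x xA) yS.
  have eA : vset G :\: A = B :|: (vset G :\: S).
    apply/setP => z; rewrite !inE.
    have h1 : (z \in A) ==> (z \in S) by apply/implyP/sA.
    have h2 : (z \in S) ==> (z \in vset G) by apply/implyP/sS.
    by move: h1 h2; case: (z \in A); case: (z \in S); case: (z \in vset G).
  have eB : vset G :\: B = A :|: (vset G :\: S).
    apply/setP => z; rewrite !inE.
    have h1 : (z \in A) ==> (z \in S) by apply/implyP/sA.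
    have h2 : (z \in S) ==> (z \in vset G) by apply/implyP/sS.
    by move: h1 h2; case: (z \in A); case: (z \in S); case: (z \in vset G).
  have eS : S = A :|: B.
    apply/setP => z; rewrite !inE.
    have h1 : (z \in A) ==> (z \in S) by apply/implyP/sA.
    by move: h1; case: (z \in A); case: (z \in S).
  have d1 : [disjoint B & vset G :\: S].
    by apply: disjP => z; rewrite !inE => /andP [_ ->].
  have d2 : [disjoint A & vset G :\: S].
    by apply: disjP => z; rewrite !inE => /sA ->.
  have d3 : [disjoint A & B].
    by apply: disjP => z; rewrite !inE => ->.
  have sAV : A \subset vset G by exact: subset_trans sSV.
  have sBV : B \subset vset G by apply: subset_trans sSV; exact: subsetDl.
  have AV : A != vset G.
    apply/negP => /eqP eAV; move/negP: SV; apply.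
    by rewrite eqEsubset sSV -{1}eAV.
  have B0 : B != set0.
    apply/negP; rewrite setD_eq0 => sSA; move/negP: AS; apply.
    by rewrite eqEsubset sAS.
  have BV : B != vset G.
    apply/negP => /eqP eBV; move/negP: SV; apply.
    by rewrite eqEsubset sSV -eBV subsetDl.
  have kA := kmin A sAV A0 AV; have kB := kmin B sBV B0 BV.
  have cBA : cross G B A = cross G A B by apply: cross_sym; case: wG.
  move: kA kB; rewrite !cutE eA eB !cross_Ur // cBA -hcA h0.
  move: cS; rewrite cutE {1}eS cross_Ul //; exact: ar1 k0.
split => //.
  move=> H sH; apply: kb; case: (sH) => w _ _.
  exact: subgraph_trans sH (induced_sub wG sSV) w.
move=> u v /= uS vS uv.
have [H [sH lt]] := km u v (subsetP sSV u uS) (subsetP sSV v vS) uv.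
have [uH vH] := uses_edge kb sH lt.
case: (sH) => wH sHV mH.
have sHS : vset H \subset S.
  apply/subsetP => w wHv; apply/negPn/negP => wS.
  set Y := vset H :&: S.
  have : kappa' H <= cut H Y.
    apply: kappa_le; first exact: subsetIl.
      by apply/set0Pn; exists u; rewrite !inE uH uS.
    by apply/negP => /eqP eY; move: wHv; rewrite -eY !inE (negbTE wS) andbF.
  have : cut H Y <= cut (add_edge G u v) S.
    rewrite !cutE; apply: cross_sub => //; first exact: subsetIr.
    apply/subsetP => z; rewrite !inE => /andP [zY zH].
    by rewrite (subsetP sHV z zH) /= andbT; move: zY; rewrite zH.
  rewrite cut_add big1 ?addn0 ?cS.
    move: lt; exact: ar2.
  move=> x xS; apply: big1 => y; rewrite !inE => /andP [yS _].
  have nyu : (y == u) = false by apply/negP => /eqP e; move: yS; rewrite e uS.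
  have nyv : (y == v) = false by apply/negP => /eqP e; move: yS; rewrite e vS.
  by rewrite nyu nyv !andbF.
exists H; split => //; split => // x y /=.
case: (boolP ((x \in S) && (y \in S))) => hs; first exact: (mH x y).
case: (posnP (mult H x y)) => [-> //|].
case: wH => _ _ /[apply] [[xH yH]].
by move: hs; rewrite (subsetP sHS x xH) (subsetP sHS y yH).
Qed.

End Aux.

Theorem lemma3p4 (T : finType) (k : nat) (G : mgraph T) :
  0 < k -> 2 <= #|vset G| -> kmaximal k G ->
  exists G1 G2 : mgraph T,
    [/\ edge_join G1 G2 k G,
        #|vset G1| = 1 \/ kmaximal k G1 &
        #|vset G2| = 1 \/ kmaximal k G2].
Proof.
move=> k0 cV kmG; have [wG kb km] := kmG.
set V := vset G.
have [v vV] : exists v, v \in V by apply/card_gt0P; apply: leq_trans cV.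
pose P := fun X : {set T} => [&& X \subset V, X != set0 & X != V].
have P1 : P [set v].
  rewrite /P sub1set vV /=; apply/andP; split.
    by apply/set0Pn; exists v; rewrite inE.
  by apply/negP => /eqP e; move: cV; rewrite -/V -e cards1.
case: (@arg_minnP _ [set v] P (cut G) P1) => X /and3P [sXV X0 XV] Xmin.
have kmin : forall Y : {set T}, Y \subset V -> Y != set0 -> Y != V -> cut G X <= cut G Y.
  by move=> Y a b c; apply: Xmin; rewrite /P a b c.
have hk1 : cut G X <= k.
  apply: leq_trans (kb G (subgraph_refl wG)).
  apply: kappa_ge; first exact: cut_bound_ge.
  exact: kmin.
have VX0 : V :\: X != set0.
  apply/negP; rewrite setD_eq0 => sVX; move/negP: XV; apply.
  by rewrite eqEsubset sXV.
have [u uX] := set0Pn _ X0.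
have [w] := set0Pn _ VX0; rewrite inE => /andP [wX wV].
have uV : u \in V := subsetP sXV u uX.
have uw : u != w by apply/negP => /eqP e; move: wX; rewrite -e uX.
have hk2 : k <= cut G X.
  rewrite leqNgt; apply/negP => lt.
  have [H [sH ltH]] := km u w uV wV uw.
  have [uH wH] := uses_edge kb sH ltH.
  case: (sH) => wfH sHV mH.
  set Y := vset H :&: X.
  have : kappa' H <= cut H Y.
    apply: kappa_le; first exact: subsetIl.
      by apply/set0Pn; exists u; rewrite !inE uH uX.
    by apply/negP => /eqP eY; move: wH; rewrite -eY !inE (negbTE wX) andbF.
  have : cut H Y <= cut (add_edge G u w) X.
    rewrite !cutE; apply: cross_sub => //; first exact: subsetIr.
    apply/subsetP => z; rewrite !inE => /andP [zY zH].
    by rewrite (subsetP sHV z zH) /= andbT; move: zY; rewrite zH.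
  have -> : cut (add_edge G u w) X = cut G X + 1.
    rewrite cut_add; congr (_ + _).
    rewrite -(sum_ind2 uX (_ : w \in V :\: X)); last by rewrite inE wX.
    apply: eq_bigr => x xX; apply: eq_bigr => y _.
    have -> : (x == w) = false by apply/negP => /eqP e; move: wX; rewrite -e xX.
    by rewrite andFb orbF.
  move: lt ltH; exact: ar3.
have ck : cut G X = k by apply/eqP; rewrite eqn_leq hk1 hk2.
have kmin' : forall Y : {set T}, Y \subset V -> Y != set0 -> Y != V -> k <= cut G Y.
  by move=> Y a b c; rewrite -ck; apply: kmin.
have [w1 c1 m1] := side_ok k0 kmG sXV X0 XV ck kmin'.
have sDV : V :\: X \subset V := subsetDl _ _.
have DV : V :\: X != V.
  by apply/negP => /eqP e; move: uV; rewrite -e inE uX.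
have eDD : V :\: (V :\: X) = X.
  apply/setP => z; rewrite !inE; have := subsetP sXV z.
  by case: (z \in X); case: (z \in V) => // /(_ isT).
have cD : cut G (V :\: X) = k.
  rewrite cutE -/V eDD cross_sym; first exact: ck.
  by case: wG.
have [w2 c2 m2] := side_ok k0 kmG sDV VX0 DV cD kmin'.
exists (induced G X), (induced G (V :\: X)); split; last 2 first.
- by right.
- by right.
split => //.
- by apply: disjP => z /= zX; rewrite inE zX.
- apply/setP => z; rewrite !inE; have := subsetP sXV z.
  by case: (z \in X); case: (z \in V) => // /(_ isT).
split => //=.
- by move=> x y -> ->.
- by move=> x y -> ->.
Qed.
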